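(* Let $(X,\tau)$ be a $T_1$ topological space. Then $X$ is a D-space if and only if the following holds: for every continuous map $f:(X,\tau)\to(\mathcal P(X),\tau_{\mathcal S(X)})$ with $x\in f(x)$ for all $x\in X$, there exist a continuous neighborhood refinement map $f_*:(X,\tau)\to(\mathcal P(X),\tau_{\mathcal S(X)})$ of $f$ and a set $D\subseteq X$ such that: (1) the map $\mathcal I:(D,\tau_D)\to(\mathcal P(D),\tau_{\mathcal S(D)})$, $\mathcal I(d)=\{d\}$, where $\tau_D$ is the subspace topology on $D$, is an injective continuous map; (2) the map $g:(X,\tau)\to(\mathcal P(D),\tau_{\mathcal S(D)})$, $g(x)=f_*(x)\cap D$, is continuous and $g^{-1}(\{\emptyset\})=\emptyset$; (3) the diagonal $\{(d,d): d\in D\}$ is contained in the pullback of $g$ and $\mathcal I$ in the category of topological spaces, i.e. in $P=\{(x,d)\in X\times D: g(x)=\mathcal I(d)\}$ (a subspace of the product $X\times D$); equivalently, $g(d)=\{d\}$ for all $d\in D$.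
   Context: For a set $A$ and $a\in A$, let $\mathcal U_A(a)=\{B\subseteq A: a\in B\}$ (the principal ultrafilter generated by $a$). The principal ultrafilter topology $\tau_{\mathcal S(A)}$ on the power set $\mathcal P(A)$ is the topology generated by the subbase $\{\mathcal U_A(a): a\in A\}$. Given a continuous map $f:(X,\tau)\to(\mathcal P(X),\tau_{\mathcal S(X)})$ with $x\in f(x)$ for all $x$, a continuous neighborhood refinement map of $f$ is a continuous map $f_*:(X,\tau)\to(\mathcal P(X),\tau_{\mathcal S(X)})$ with $x\in f_*(x)\subseteq f(x)$ for all $x\in X$. An open neighborhood assignment on $(X,\tau)$ is a function $N:X\to\tau$ with $x\in N(x)$ for all $x$. A space $(X,\tau)$ is a D-space if for every open neighborhood assignment $N$ there is a closed discrete set $D\subseteq X$ with $\bigcup_{d\in D}N(d)=X$. *)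

(* Defs.v *)
From HB Require Import structures.
From mathcomp Require Import all_boot all_order.
From mathcomp Require Import all_classical topology.
From Stdlib Require List.

Set Implicit Arguments.
Unset Strict Implicit.
Unset Printing Implicit Defensive.

Local Open Scope classical_set_scope.

Definition pu (A : Type) (a : A) : set (set A) := [set B | B a].

(* Open sets of the principal ultrafilter topology τ_{S(A)} on P(A) = set A:
   the topology generated by the subbase {U_A(a) | a ∈ A}, i.e. unions of
   finite intersections of subbasic sets (the empty intersection being P(A)). *)
Definition pu_open (A : Type) : set (set (set A)) :=
  [set W | forall B, W B -> exists s : list A,
     (forall a, List.In a s -> pu a B) /\
     (forall C, (forall a, List.In a s -> pu a C) -> W C)].

Arguments pu_open A _ : clear implicits.

Definition cont (S T : Type) (opS : set (set S)) (opT : set (set T))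
  (h : S -> T) : Prop :=
  forall W, opT W -> opS (h @^-1` W).

Definition subsp_open (X : topologicalType) (D : set X) : set (set {x : X | D x}) :=
  [set U | exists V : set X, open V /\ U = (@sval X D) @^-1` V].

Arguments subsp_open {X} D _.

Definition closed_discrete (X : topologicalType) (D : set X) : Prop :=
  closed D /\ forall d, D d -> exists V : set X, open V /\ V `&` D = [set d].

Definition D_space (X : topologicalType) : Prop :=
  forall N : X -> set X, (forall x, open (N x) /\ N x x) ->
  exists D : set X, closed_discrete D /\ \bigcup_(d in D) N d = setT.

Definition nbhd_refinement (X : topologicalType) (f fs : X -> set X) : Prop :=
  cont open (pu_open X) fs /\ (forall x, fs x x /\ fs x `<=` f x).

(* Main.v *)
Require Import Defs.
From HB Require Import structures.
From mathcomp Require Import all_boot all_order.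
From mathcomp Require Import all_classical topology.
From Stdlib Require List.

Local Open Scope classical_set_scope.

Lemma open_local (T : topologicalType) (A : set T) :
  (forall x, A x -> exists B, open B /\ B x /\ B `<=` A) -> open A.
Proof.
move=> H; rewrite openE => x /H [B [oB [Bx BA]]].
apply: (filterS BA); apply: open_nbhs_nbhs; rewrite open_nbhsE; split => //.
by apply: open_nbhs_nbhs; split.
Qed.

Lemma list_open (T : topologicalType) (A : Type) (P : T -> A -> Prop) :
  (forall a, open [set x | P x a]) ->
  forall s, open [set x | forall a, List.In a s -> P x a].
Proof.
move=> H; elim => [|a s IH].
  rewrite (_ : [set x | _] = setT); first exact: openT.
  by apply/seteqP; split => x //= _ a [].
rewrite (_ : [set x | _] = [set x | P x a] `&` [set x | forall b, List.In b s -> P x b]).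
  exact: openI.
apply/seteqP; split => x /=.
  by move=> Hx; split => [|b Hb]; apply: Hx; [left|right].
by move=> [Pa Ps] b [<-|Hb] //; apply: Ps.
Qed.

Lemma cont_pu (T : topologicalType) (A : Type) (h : T -> set A) :
  (forall a, open [set x | h x a]) -> cont open (pu_open A) h.
Proof.
move=> H W oW; apply: open_local => x /oW [s [Hs HW]].
exists [set y | forall a, List.In a s -> h y a]; split; first exact: (@list_open _ _ (fun y a => h y a)).
split; first by move=> a /Hs.
by move=> y Hy; apply: HW => a /Hy.
Qed.

Lemma pu_open_pu (A : Type) (a : A) : pu_open A (pu a).
Proof. by move=> B Ba; exists [:: a]; split => [b [<-|[]]|C HC] //; apply: HC; left. Qed.

Lemma sig_eq (X : Type) (D : set X) (d d' : {x : X | D x}) : sval d = sval d' -> d = d'.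
Proof.
case: d => x hx; case: d' => y hy /= exy; subst y; congr exist; exact: Prop_irrelevance.
Qed.

Theorem mainTheorem1 (X : topologicalType) (hT1 : @accessible_space X) :
  D_space X <->
  (forall f : X -> set X, cont open (pu_open X) f -> (forall x, f x x) ->
   exists fs : X -> set X, nbhd_refinement f fs /\
   exists D : set X,
     (* (1) I : D -> P(D), d |-> {d}, injective and continuous *)
     (injective (fun d : {x : X | D x} => [set d]) /\
      cont (subsp_open D) (pu_open {x : X | D x})
           (fun d : {x : X | D x} => [set d])) /\
     (* (2) g : X -> P(D), g x = f_*(x) ∩ D, continuous, g^{-1}({∅}) = ∅ *)
     (cont open (pu_open {x : X | D x})
           (fun x => [set d : {x : X | D x} | fs x (sval d)]) /\
      (fun x => [set d : {x : X | D x} | fs x (sval d)]) @^-1` [set set0]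
        = set0) /\
     (* (3) diagonal ⊆ pullback P = {(x,d) ∈ X × D | g x = I d} *)
     ([set p : X * {x : X | D x} | exists d : {x : X | D x}, p = (sval d, d)]
        `<=` [set p : X * {x : X | D x} |
               [set d : {x : X | D x} | fs p.1 (sval d)] = [set p.2]])).
Proof.
split.
- move=> Hd f cf fx.
  have oM : forall a, open [set x | f x a] by move=> a; exact (cf _ (@pu_open_pu _ a)).
  have [D [[cD dD] cov]] := Hd (fun a => [set x | f x a]) (fun a => conj (oM a) (fx a)).
  pose fs := fun x : X => [set a | f x a /\ (D a -> D x -> x = a)].
  have ofs : forall a, open [set x | fs x a].
    move=> a; case: (pselect (D a)) => Da.
      have [V [oV VD]] := dD a Da.
      rewrite (_ : [set x | fs x a] = [set x | f x a] `&` ~` (D `&` ~` V)).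
        apply: openI => //; apply: closed_openC; apply: closedI => //.
        by rewrite closedC.
      apply/seteqP; split => x /=.
        move=> [fxa H]; split => // -[Dx nVx]; apply: nVx.
        have : [set a] x by rewrite (H Da Dx).
        by rewrite -VD => -[].
      move=> [fxa H]; split => // _ Dx.
      have : (V `&` D) x.
        split => //; apply: contrapT => nV; exact: H.
      by rewrite VD.
    rewrite (_ : [set x | fs x a] = [set x | f x a]) //.
    by apply/seteqP; split => x /= => [[]|] //.
  exists fs; split.
    split; first exact: cont_pu.
    by move=> x; split => [|a []] //.
  exists D; split; [split|split; [split|]].
  + move=> d d' /(congr1 (fun S => S d)) /=.
    by move=> E; rewrite -E.
  + move=> W _.
    have ch : forall d : {x : X | D x}, {V : set X | open V /\ V `&` D = [set sval d]}.
      move=> d; apply: cid; exact: dD (svalP d).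
    exists (\bigcup_(d in (fun d : {x : X | D x} => [set d]) @^-1` W) sval (ch d)).
    split; first by apply: bigcup_open => i _; case: (svalP (ch i)).
    apply/seteqP; split => y /=.
      move=> Wy; exists y => //.
      case: (ch y) => /= V [_ E].
      have : [set sval y] (sval y) by [].
      by rewrite -E => -[].
    move=> [d Wd Vy].
    move: Vy; case: (ch d) => /= V [_ E] Vy.
    have : (V `&` D) (sval y) by split => //; exact: svalP.
    by rewrite E => /= /sig_eq ->.
  + by apply: cont_pu => d; exact: ofs.
  + apply/seteqP; split => x //= E.
    have [d Dd fsxd] : exists2 d, D d & fs x d.
      case: (pselect (D x)) => Dx; first by exists x => //; split.
      have : (setT : set X) x by [].
      rewrite -cov => -[d Dd fxd]; exists d => //; split => // _ /Dx [].
    have : [set d0 : {x : X | D x} | fs x (sval d0)] (exist _ d Dd) by [].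
    by rewrite E.
  + move=> p [d ->] /=; apply/seteqP; split => e /=.
      by move=> [_ H]; apply: sig_eq; symmetry; apply: H; exact: svalP.
    by move=> ->; split.
- move=> H N HN.
  have [fs [[cfs Hfs] [D [_ [[_ g0] diag]]]]] :=
    H (fun x => [set a | N a x]) (@cont_pu _ _ (fun x => [set a | N a x]) (fun a => (HN a).1)) (fun x => (HN x).2).
  have ofs : forall d, open [set y | fs y d] by move=> d; exact (cfs _ (@pu_open_pu _ d)).
  have K1 : forall x, exists2 d, D d & fs x d.
    move=> x; apply: contrapT => nH.
    have : ((fun x => [set d : {x : X | D x} | fs x (sval d)]) @^-1` [set set0]) x.
      rewrite /=; apply/seteqP; split => // -[d Dd] /= fxd; apply: nH; by exists d.
    by rewrite g0.
  have K2 : forall d d', D d -> D d' -> fs d' d -> d = d'.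
    move=> d d' Dd Dd' fs'.
    have := diag (d', exist _ d' Dd') (ex_intro _ (exist _ d' Dd') erefl).
    move=> /= /(congr1 (fun S => S (exist _ d Dd))) /= E.
    have : exist (fun x => D x) d Dd = exist _ d' Dd' by rewrite -[_ = _]/(_) -E.
    by move=> /(congr1 sval).
  exists D; split; [split|].
  + rewrite -openC; apply: open_local => x nDx.
    have [d Dd fxd] := K1 x.
    exists ([set y | fs y d] `&` ~` [set d]); split.
      apply: openI => //; apply: closed_openC; exact: accessible_closed_set1.
    split; first by split => //= exd; apply: nDx; rewrite exd.
    by move=> y [fyd nyd] Dy; apply: nyd; rewrite /= (K2 _ _ Dd Dy fyd).
  + move=> d Dd; exists [set y | fs y d]; split => //.
    apply/seteqP; split => y /=.
      by move=> [fyd Dy]; rewrite (K2 _ _ Dd Dy fyd).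
    by move=> ->; split => //; exact: (Hfs d).1.
  + apply/seteqP; split => x // _.
    have [d Dd fxd] := K1 x; exists d => //; exact: (Hfs x).2 _ fxd.
Qed.
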